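(* For every integer $m\geq 3$, the edge set of $C_m[4]$ can be partitioned into two $C_4$-factors and two $C_m$-factors.
   Context: For a graph $G$ and a positive integer $k$, $G[k]$ is the graph with vertex set $V(G)\times\{0,1,\dots,k-1\}$ in which $(u,i)$ and $(w,j)$ are adjacent if and only if $uw\in E(G)$. $C_m$ is the cycle of length $m$. A $C_k$-factor of a graph is a spanning subgraph each of whose components is a cycle of length $k$. *)

(* Defs.v *)
From HB Require Import structures.
From mathcomp Require Import all_boot.
Set Implicit Arguments. Unset Strict Implicit. Unset Printing Implicit Defensive.

(* A simple graph on a finite type T is given by a symmetric irreflexive
   adjacency relation; its edges are the 2-element sets {x, y} with e x y. *)
Definition edge_set (T : finType) (e : rel T) : {set {set T}} :=
  [set [set x; y] | x in [set: T], y in [pred z | e x z]].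

Definition cycle_adj (m : nat) : rel 'I_m :=
  fun u w => (val w == (val u).+1 %% m) || (val u == (val w).+1 %% m).

Definition lex_adj (T : finType) (e : rel T) (k : nat) : rel (T * 'I_k) :=
  fun x y => e x.1 y.1.
Arguments lex_adj [T] e k _ _.

Definition cycle_edges (T : finType) (c : seq T) : {set {set T}} :=
  [set [set x; next c x] | x in c].

Definition is_cycle_factor (T : finType) (k : nat) (F : {set {set T}}) : Prop :=
  exists cs : seq (seq T),
    [/\ all (fun c => size c == k) cs,
        uniq (flatten cs),
        (forall x : T, x \in flatten cs) &
        F = \bigcup_(c <- cs) cycle_edges c].

(* Main.v *)
Require Import Defs.
From HB Require Import structures.
From mathcomp Require Import all_boot zify.
Set Implicit Arguments. Unset Strict Implicit. Unset Printing Implicit Defensive.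

Lemma cycle_edges4 (T : finType) (a b c d : T) : a != b -> a != c -> a != d -> b != c -> b != d -> c != d ->
  cycle_edges [:: a; b; c; d] = [set [set a; b]; [set b; c]; [set c; d]; [set d; a]].
Proof.
move=> ab ac ad bc bd cd.
have ba : b != a by rewrite eq_sym.
have ca : c != a by rewrite eq_sym.
have da : d != a by rewrite eq_sym.
have cb : c != b by rewrite eq_sym.
have db : d != b by rewrite eq_sym.
have dc : d != c by rewrite eq_sym.
apply/setP => S; rewrite /cycle_edges !inE; apply/imsetP/idP.
  case=> x; rewrite !inE => /or4P [] /eqP -> ->;
  rewrite /next /= ?eqxx ?(negbTE ab, negbTE ac, negbTE ad, negbTE ba, negbTE bc, negbTE bd,
     negbTE ca, negbTE cb, negbTE cd, negbTE da, negbTE db, negbTE dc) /= ?eqxx ?orbT //=.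
by rewrite -!orbA => /or4P [] /eqP ->; [exists a | exists b | exists c | exists d]; rewrite ?inE ?eqxx ?orbT // /next /= ?eqxx ?(negbTE ba, negbTE ca, negbTE cb, negbTE da, negbTE db, negbTE dc) ?eqxx.
Qed.


Definition o0 : 'I_4 := @Ordinal 4 0 isT.
Definition o1 : 'I_4 := @Ordinal 4 1 isT.
Definition o2 : 'I_4 := @Ordinal 4 2 isT.
Definition o3 : 'I_4 := @Ordinal 4 3 isT.

Lemma I4_ind (P : 'I_4 -> Prop) : P o0 -> P o1 -> P o2 -> P o3 -> forall i, P i.
Proof.
move=> p0 p1 p2 p3 [[|[|[|[|n]]]] H].
- by rewrite (_ : Ordinal H = o0) //; apply: val_inj.
- by rewrite (_ : Ordinal H = o1) //; apply: val_inj.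
- by rewrite (_ : Ordinal H = o2) //; apply: val_inj.
- by rewrite (_ : Ordinal H = o3) //; apply: val_inj.
- by [].
Qed.

Definition TT : seq (seq (seq nat)) :=
  [:: [:: [:: 3; 4; 1; 1]; [:: 4; 3; 1; 1]; [:: 2; 2; 3; 4]; [:: 2; 2; 4; 3]];
      [:: [:: 3; 1; 4; 1]; [:: 1; 3; 1; 4]; [:: 2; 4; 3; 2]; [:: 4; 2; 2; 3]];
      [:: [:: 3; 2; 4; 1]; [:: 2; 3; 1; 4]; [:: 2; 4; 3; 1]; [:: 4; 2; 1; 3]]].
Definition tab (k i j : nat) : nat := nth 0 (nth [::] (nth [::] TT k) i) j.

Lemma tab_range k (i j : 'I_4) : k < 3 -> 0 < tab k i j <= 4.
Proof. by case: k => [|[|[|k]]] // _; elim/I4_ind: i; elim/I4_ind: j. Qed.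

Lemma tab3 k (i j : 'I_4) : k < 3 -> (tab k i j == 3) = (i == j).
Proof. by case: k => [|[|[|k]]] // _; elim/I4_ind: i; elim/I4_ind: j. Qed.

Lemma tab4 k (i j j' : 'I_4) : k < 3 -> tab k i j = 4 -> tab k i j' = 4 -> j = j'.
Proof. by case: k => [|[|[|k]]] // _; elim/I4_ind: i; elim/I4_ind: j; elim/I4_ind: j'. Qed.

Definition x1 (i : 'I_4) : 'I_4 := match val i with 0 => o1 | 1 => o0 | 2 => o3 | _ => o2 end.
Definition rho (i : 'I_4) : 'I_4 := match val i with 0 => o3 | 1 => o2 | 2 => o0 | _ => o1 end.
Definition rhoinv (i : 'I_4) : 'I_4 := match val i with 0 => o2 | 1 => o3 | 2 => o1 | _ => o0 end.

Lemma neq2 (A B : eqType) (x y : A * B) : x.2 != y.2 -> x != y.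
Proof. by apply: contra => /eqP ->. Qed.

Ltac pick := match goal with
 | |- _ \/ _ => first [left; pick | right; pick]
 | |- is_true (_ || _) => first [apply/orP; left; pick | apply/orP; right; pick]
 | |- is_true (_ == _) => apply/eqP; match goal with
      | |- [set ?a; ?b] = [set ?c; ?d] =>
          first [constr_eq a c; constr_eq b d; reflexivity | constr_eq a d; constr_eq b c; apply: setUC]
     end
 end.
Section S.
Variable m : nat.
Hypothesis hm : 3 <= m.
Local Notation V := ('I_m * 'I_4)%type.
Lemma valS (u : 'I_m) : val (ordS u) = if u.+1 < m then u.+1 else 0.
Proof.
rewrite /ordS /=; case: ltnP => h; first by rewrite modn_small.
have -> : u.+1 = m by have := ltn_ord u; lia.
by rewrite modnn.
Qed.

Lemma next_enum_ord (u : 'I_m) : next (enum 'I_m) u = ordS u.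
Proof.
rewrite next_nth mem_enum /=.
case E: (enum 'I_m) => [|y p]; first by have := mem_enum (pred_of_simpl predT) u; rewrite E.
apply: val_inj; rewrite valS.
have hs : size p = m.-1 by have := size_enum_ord m; rewrite E /=; lia.
have hy : val y = 0 by have := nth_enum_ord y (n:=m) (m:=0); rewrite E /=; apply; lia.
rewrite -E index_enum_ord.
case: ltnP => h.
  have := nth_enum_ord y (n:=m) (m:=u.+1) h; rewrite E /= => ->. by [].
rewrite nth_default // hs; lia.
Qed.


Lemma cycle_edgesM (T : finType) (f : 'I_m -> T) : injective f ->
  cycle_edges (map f (enum 'I_m)) = [set [set f u; f (ordS u)] | u in 'I_m].
Proof.
move=> fi; apply/setP => S; apply/imsetP/imsetP.
  case=> x /mapP [u _ ->] ->; exists u => //.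
  by rewrite (next_map fi (enum_uniq _)) next_enum_ord.
case=> u _ ->; exists (f u); first by rewrite map_f ?mem_enum.
by rewrite (next_map fi (enum_uniq _)) next_enum_ord.
Qed.

Lemma memF (I : finType) (c : I -> seq V) S :
  (S \in \bigcup_(x <- map c (enum I)) cycle_edges x) <-> exists v, S \in cycle_edges (c v).
Proof.
rewrite big_map big_enum /=; split.
  by case/bigcupP => v _ h; exists v.
by case=> v h; apply/bigcupP; exists v.
Qed.

Lemma factorP (I : finType) (c : I -> seq V) (len : nat) :
  (forall v, size (c v) = len) -> (forall x, exists v, x \in c v) ->
  len * #|I| = m * 4 ->
  is_cycle_factor len (\bigcup_(x <- map c (enum I)) cycle_edges x).
Proof.
move=> hs hc hcard; exists (map c (enum I)); split => //.
- by apply/allP => s /mapP [v _ ->]; rewrite hs.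
- have hu : uniq (enum [set: 'I_m * 'I_4]) by exact: enum_uniq.
  apply: (leq_size_uniq hu).
    move=> x _; case: (hc x) => v hv; apply/flatten_mapP; exists v => //; exact: mem_enum.
  rewrite size_flatten /shape -map_comp sumnE big_map.
  rewrite (eq_bigr (fun _ => len)); last by move=> v _; rewrite /= hs.
  by rewrite big_const_seq count_predT -!cardE iter_addn_0 hcard cardsT card_prod !card_ord.
- by move=> x; case: (hc x) => v hv; apply/flatten_mapP; exists v => //; exact: mem_enum.
Qed.

Definition fe (u : 'I_m) (i j : 'I_4) : {set V} := [set (u, i); (ordS u, j)].

Lemma ordS_neq (u : 'I_m) : ordS u != u.
Proof. apply/eqP => /(congr1 val); rewrite valS; have := ltn_ord u; case: ifP => h /=; lia. Qed.

Lemma ordSS_neq (u : 'I_m) : ordS (ordS u) != u.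
Proof.
apply/eqP => E; have := congr1 val E.
move: (valS u) (valS (ordS u)) (ltn_ord u) (ltn_ord (ordS u)) => /=.
case: ifP => ?; case: ifP => ?; lia.
Qed.

Lemma fe_inj u i j u' i' j' : fe u i j = fe u' i' j' -> [/\ u = u', i = i' & j = j'].
Proof.
move=> E.
have h1 : (u, i) \in fe u' i' j' by rewrite -E !inE eqxx.
have h2 : (ordS u, j) \in fe u' i' j' by rewrite -E !inE eqxx orbT.
move: h1 h2; rewrite !inE !xpair_eqE.
case/orP => /andP [/eqP eu /eqP ei]; case/orP => /andP [/eqP e1 /eqP e2].
- by move: (ordS_neq u); rewrite e1 eu eqxx.
- by split.
- by move: (ordSS_neq u'); rewrite -eu e1 eqxx.
- by move/ordS_inj: e1 => e1; move: (ordS_neq u'); rewrite -eu e1 eqxx.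
Qed.

Lemma edgeP S : S \in edge_set (lex_adj (@cycle_adj m) 4) <-> exists u i j, S = fe u i j.
Proof.
split.
  case/imset2P => [[u i] [w j]] _; rewrite inE /lex_adj /cycle_adj /= => /orP [] /eqP h ->.
    have -> : w = ordS u by apply: val_inj.
    by exists u, i, j.
  have -> : u = ordS w by apply: val_inj.
  by exists w, j, i; rewrite /fe setUC.
case=> u [i [j ->]]; apply/imset2P; exists (u, i) (ordS u, j) => //.
by rewrite inE /lex_adj /cycle_adj /= eqxx.
Qed.

Definition kind (u : 'I_m) : nat :=
  if odd m && (val u == m - 2) then 1 else if odd m && (val u == m - 1) then 2 else 0.

Lemma kind_lt u : kind u < 3.
Proof. by rewrite /kind; case: ifP => //; case: ifP. Qed.

Lemma kindS2 (v : 'I_m) : kind (ordS v) = 2 -> kind v = 1.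
Proof.
rewrite /kind valS; have := ltn_ord v.
case: (odd m) => //=; repeat case: ifP; lia.
Qed.

Lemma kindS1 u : kind u = 1 -> kind (ordS u) = 2.
Proof.
rewrite /kind valS; have := ltn_ord u.
case: (odd m) => //=; repeat case: ifP; lia.
Qed.

Lemma kindP2 u : kind u = 2 -> kind (ord_pred u) = 1.
Proof. by move=> h; apply: kindS2; rewrite ord_predK. Qed.


Definition col (u : 'I_m) (i j : 'I_4) : nat := tab (kind u) i j.
Definition isCol k (S : {set V}) := exists u i j, S = fe u i j /\ col u i j = k.

Lemma isColF k u i j : col u i j = k -> isCol k [set (u, i); (ordS u, j)].
Proof. by move=> h; exists u, i, j. Qed.
Lemma isColB k u i j : col u i j = k -> isCol k [set (ordS u, j); (u, i)].
Proof. by move=> h; exists u, i, j; rewrite /fe setUC. Qed.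
Lemma isColP k u i j : col (ord_pred u) i j = k -> isCol k [set (ord_pred u, i); (u, j)].
Proof. by move=> h; exists (ord_pred u), i, j; rewrite /fe ord_predK. Qed.
Lemma isColPB k u i j : col (ord_pred u) i j = k -> isCol k [set (u, j); (ord_pred u, i)].
Proof. by move=> h; exists (ord_pred u), i, j; rewrite /fe ord_predK setUC. Qed.

Ltac colt Hk := first [apply: isColF | apply: isColB | apply: isColP | apply: isColPB];
  rewrite /col ?Hk ?(kindS1 Hk) ?(kindP2 Hk) //.

Definition c1 (u : 'I_m) : seq V :=
  if kind u == 1 then [:: (u, o0); (ordS u, o1); (ordS (ordS u), o2); (ordS u, o3)]
  else if kind u == 2 then [:: (ord_pred u, o1); (u, o0); (ordS u, o3); (u, o2)]
  else [:: (u, o0); (ordS u, o2); (u, o1); (ordS u, o3)].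

Lemma P1_1 u S : S \in cycle_edges (c1 u) -> isCol 1 S.
Proof.
rewrite /c1; have := kind_lt u; case Hk: (kind u) => [|[|[|]]] // _ /=;
rewrite cycle_edges4 ?neq2 // !inE -!orbA => /or4P [] /eqP ->; colt Hk.
Qed.

Lemma P2_1 u i j : col u i j = 1 -> exists v, fe u i j \in cycle_edges (c1 v).
Proof.
rewrite /col; have := kind_lt u; case Hk: (kind u) => [|[|[|]]] // _ H.
- exists u; move: H; rewrite /c1 Hk /= cycle_edges4 ?neq2 //.
  by elim/I4_ind: i; elim/I4_ind: j => //= _; rewrite /fe !inE; pick.
- suff : fe u i j \in cycle_edges (c1 u) \/ fe u i j \in cycle_edges (c1 (ordS u)).
    by case=> h; [exists u | exists (ordS u)].
  move: H; rewrite /c1 Hk (kindS1 Hk) ordSK /= !cycle_edges4 ?neq2 //.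
  by elim/I4_ind: i; elim/I4_ind: j => //= _; rewrite /fe !inE; pick.
- suff : fe u i j \in cycle_edges (c1 u) \/ fe u i j \in cycle_edges (c1 (ord_pred u)).
    by case=> h; [exists u | exists (ord_pred u)].
  move: H; rewrite /c1 Hk (kindP2 Hk) ord_predK /= !cycle_edges4 ?neq2 //.
  by elim/I4_ind: i; elim/I4_ind: j => //= _; rewrite /fe !inE; pick.
Qed.

Lemma kindPS1 u : kind (ord_pred u) = 1 -> kind u = 2.
Proof. by move/kindS1; rewrite ord_predK. Qed.

Lemma P3_1 x : exists v, x \in c1 v.
Proof.
case: x => u i; have := kind_lt u; have := kind_lt (ord_pred u).
case Hk: (kind u) => [|[|[|]]] //; case Hp: (kind (ord_pred u)) => [|[|[|]]] // _ _.
all: try (by move: (kindPS1 Hp); rewrite Hk).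
all: try (by move: (kindP2 Hk); rewrite Hp).
all: elim/I4_ind: i.
all: try solve [ exists u; rewrite /c1 Hk /= !inE ?eqxx ?orbT ?orTb // ].
all: try solve [ exists (ordS u); rewrite /c1 (kindS1 Hk) ordSK /= !inE ?eqxx ?orbT ?orTb // ].
all: try solve [ exists (ord_pred u); rewrite /c1 Hp ?ord_predK /= !inE ?eqxx ?orbT ?orTb // ].
all: try solve [ exists (ord_pred (ord_pred u)); rewrite /c1 (kindP2 Hp) !ord_predK /= !inE ?eqxx ?orbT ?orTb // ].
Qed.
Definition c2 (u : 'I_m) : seq V :=
  if kind u == 1 then [:: (u, o2); (ordS u, o0); (ordS (ordS u), o1); (ordS u, o3)]
  else if kind u == 2 then [:: (ord_pred u, o3); (u, o1); (ordS u, o0); (u, o2)]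
  else [:: (u, o2); (ordS u, o0); (u, o3); (ordS u, o1)].

Lemma P1_2 u S : S \in cycle_edges (c2 u) -> isCol 2 S.
Proof.
rewrite /c2; have := kind_lt u; case Hk: (kind u) => [|[|[|]]] // _ /=;
rewrite cycle_edges4 ?neq2 // !inE -!orbA => /or4P [] /eqP ->; colt Hk.
Qed.

Lemma P2_2 u i j : col u i j = 2 -> exists v, fe u i j \in cycle_edges (c2 v).
Proof.
rewrite /col; have := kind_lt u; case Hk: (kind u) => [|[|[|]]] // _ H.
- exists u; move: H; rewrite /c2 Hk /= cycle_edges4 ?neq2 //.
  by elim/I4_ind: i; elim/I4_ind: j => //= _; rewrite /fe !inE; pick.
- suff : fe u i j \in cycle_edges (c2 u) \/ fe u i j \in cycle_edges (c2 (ordS u)).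
    by case=> h; [exists u | exists (ordS u)].
  move: H; rewrite /c2 Hk (kindS1 Hk) ordSK /= !cycle_edges4 ?neq2 //.
  by elim/I4_ind: i; elim/I4_ind: j => //= _; rewrite /fe !inE; pick.
- suff : fe u i j \in cycle_edges (c2 u) \/ fe u i j \in cycle_edges (c2 (ord_pred u)).
    by case=> h; [exists u | exists (ord_pred u)].
  move: H; rewrite /c2 Hk (kindP2 Hk) ord_predK /= !cycle_edges4 ?neq2 //.
  by elim/I4_ind: i; elim/I4_ind: j => //= _; rewrite /fe !inE; pick.
Qed.

Lemma P3_2 x : exists v, x \in c2 v.
Proof.
case: x => u i; have := kind_lt u; have := kind_lt (ord_pred u).
case Hk: (kind u) => [|[|[|]]] //; case Hp: (kind (ord_pred u)) => [|[|[|]]] // _ _.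
all: try (by move: (kindPS1 Hp); rewrite Hk).
all: try (by move: (kindP2 Hk); rewrite Hp).
all: elim/I4_ind: i.
all: try solve [ exists u; rewrite /c2 Hk /= !inE ?eqxx ?orbT ?orTb // ].
all: try solve [ exists (ordS u); rewrite /c2 (kindS1 Hk) ordSK /= !inE ?eqxx ?orbT ?orTb // ].
all: try solve [ exists (ord_pred u); rewrite /c2 Hp ?ord_predK /= !inE ?eqxx ?orbT ?orTb // ].
all: try solve [ exists (ord_pred (ord_pred u)); rewrite /c2 (kindP2 Hp) !ord_predK /= !inE ?eqxx ?orbT ?orTb // ].
Qed.

Lemma valS' (u : 'I_m) : nat_of_ord (ordS u) = if u.+1 < m then u.+1 else 0.
Proof. exact: valS. Qed.

Lemma kind1_odd (u : 'I_m) : kind u = 1 -> odd u /\ u.+1 < m.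
Proof.
rewrite /kind; case Em: (odd m) => //=; case: ifP => [/eqP h|] //.
  move=> _; rewrite h oddB ?Em //; lia.
by case: ifP.
Qed.

Lemma kind2_last (u : 'I_m) : kind u = 2 -> ~~ (u.+1 < m).
Proof. rewrite /kind; case: (odd m) => //=; case: ifP => //; case: ifP => // /eqP h; lia. Qed.

Lemma kind0_last (u : 'I_m) : ~~ (u.+1 < m) -> kind u = 0 -> odd u.
Proof.
move=> h; have hu := ltn_ord u; have e : nat_of_ord u = m - 1 by lia.
rewrite /kind e; case Em: (odd m) => /=.
  case: ifP => [/eqP|_]; first lia.
  by case: ifP => [_ //|/eqP ne]; exfalso; apply: ne.
by move=> _; rewrite oddB ?Em //; lia.
Qed.

Lemma kindS_last (u : 'I_m) : ~~ (u.+1 < m) -> kind (ordS u) = 0 /\ odd (ordS u) = false.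
Proof.
move=> h; rewrite /kind ?valS ?valS' (negbTE h) /=; split => //.
case: ifP => [/andP [_ /eqP]|_]; first lia.
by case: ifP => [/andP [_ /eqP]|_] //; lia.
Qed.

Definition c3 (j : 'I_4) : seq V := [seq (u, j) | u <- enum 'I_m].

Lemma P1_3 j S : S \in cycle_edges (c3 j) -> isCol 3 S.
Proof.
rewrite /c3 cycle_edgesM; last by move=> a b [].
case/imsetP => u _ ->; apply: isColF; rewrite /col; apply/eqP; by rewrite tab3 ?kind_lt.
Qed.

Lemma P2_3 u i j : col u i j = 3 -> exists v, fe u i j \in cycle_edges (c3 v).
Proof.
move/eqP; rewrite /col tab3 ?kind_lt // => /eqP <-.
exists i; rewrite /c3 cycle_edgesM; last by move=> a b [].
by apply/imsetP; exists u.
Qed.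

Lemma P3_3 x : exists v, x \in c3 v.
Proof. by case: x => u i; exists i; apply/mapP; exists u; rewrite ?mem_enum. Qed.

Definition h4 (u : 'I_m) (j : 'I_4) : 'I_4 :=
  if kind u == 2 then rho j else if odd u then x1 j else j.
Definition h4inv (u : 'I_m) (i : 'I_4) : 'I_4 :=
  if kind u == 2 then rhoinv i else if odd u then x1 i else i.

Lemma h4K u i : h4 u (h4inv u i) = i.
Proof. rewrite /h4 /h4inv; case: (kind u == 2); case: (odd u); by elim/I4_ind: i. Qed.

Lemma col4 u j : col u (h4 u j) (h4 (ordS u) j) = 4.
Proof.
rewrite /col /h4; case: (ltnP u.+1 m) => h.
- have Ko : odd (ordS u) = ~~ odd u by rewrite valS' h.
  have := kind_lt u; case Hk: (kind u) => [|[|[|]]] // _.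
  + have K2 : (kind (ordS u) == 2) = false.
      by apply/negbTE/eqP => /kindS2; rewrite Hk.
    rewrite K2 Ko; case: (odd u) => /=; by elim/I4_ind: j.
  + rewrite (kindS1 Hk) /=; case: (kind1_odd Hk) => -> _; by elim/I4_ind: j.
  + by move: (kind2_last Hk); rewrite h.
- have h' : ~~ (u.+1 < m) by rewrite -leqNgt.
  case: (kindS_last h') => -> -> /=.
  have := kind_lt u; case Hk: (kind u) => [|[|[|]]] // _.
  + rewrite (kind0_last h' Hk) /=; by elim/I4_ind: j.
  + by case: (kind1_odd Hk) => _ h2; move: h'; rewrite h2.
  + by elim/I4_ind: j.
Qed.

Definition c4 (j : 'I_4) : seq V := [seq (u, h4 u j) | u <- enum 'I_m].

Lemma P1_4 j S : S \in cycle_edges (c4 j) -> isCol 4 S.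
Proof.
rewrite /c4 cycle_edgesM; last by move=> a b [].
by case/imsetP => u _ ->; apply: isColF; apply: col4.
Qed.

Lemma P2_4 u i j : col u i j = 4 -> exists v, fe u i j \in cycle_edges (c4 v).
Proof.
move=> h; exists (h4inv u i); rewrite /c4 cycle_edgesM; last by move=> a b [].
apply/imsetP; exists u => //; rewrite h4K.
have e : j = h4 (ordS u) (h4inv u i).
  apply: (@tab4 (kind u) i) => //; first exact: kind_lt.
  by have := col4 u (h4inv u i); rewrite h4K.
by rewrite -e.
Qed.

Lemma P3_4 x : exists v, x \in c4 v.
Proof.
case: x => u i; exists (h4inv u i); apply/mapP; exists u; rewrite ?mem_enum //.
by rewrite h4K.
Qed.

Lemma isCol_edge k S : isCol k S -> S \in edge_set (lex_adj (@cycle_adj m) 4).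
Proof. by case=> u [i [j [-> _]]]; apply/edgeP; exists u, i, j. Qed.

Lemma isCol_uniq k l S : isCol k S -> isCol l S -> k = l.
Proof.
case=> u [i [j [-> <-]]] [u' [i' [j' [E <-]]]].
by case: (fe_inj E) => -> -> ->.
Qed.

Lemma main_sec :
  exists F1 F2 F3 F4 : {set {set ('I_m * 'I_4)}},
    [/\ F1 :|: F2 :|: F3 :|: F4 = edge_set (lex_adj (@cycle_adj m) 4),
        [&& [disjoint F1 & F2], [disjoint F1 & F3], [disjoint F1 & F4],
            [disjoint F2 & F3], [disjoint F2 & F4] & [disjoint F3 & F4]],
        is_cycle_factor 4 F1 /\ is_cycle_factor 4 F2 &
        is_cycle_factor m F3 /\ is_cycle_factor m F4].
Proof.
set F1 := \bigcup_(x <- map c1 (enum 'I_m)) cycle_edges x.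
set F2 := \bigcup_(x <- map c2 (enum 'I_m)) cycle_edges x.
set F3 := \bigcup_(x <- map c3 (enum 'I_4)) cycle_edges x.
set F4 := \bigcup_(x <- map c4 (enum 'I_4)) cycle_edges x.
have G1 S : S \in F1 -> isCol 1 S by case/memF => v; apply: P1_1.
have G2 S : S \in F2 -> isCol 2 S by case/memF => v; apply: P1_2.
have G3 S : S \in F3 -> isCol 3 S by case/memF => v; apply: P1_3.
have G4 S : S \in F4 -> isCol 4 S by case/memF => v; apply: P1_4.
exists F1, F2, F3, F4; split.
- apply/setP => S; rewrite !inE; apply/idP/idP.
    case/orP => [/orP [/orP [/G1|/G2]|/G3]|/G4]; apply: isCol_edge.
  case/edgeP => u [i [j ->]].
  have := tab_range i j (kind_lt u); rewrite -/(col u i j).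
  case E: (col u i j) => [|[|[|[|[|]]]]] //= _.
  + by apply/orP; left; apply/orP; left; apply/orP; left; apply/memF; apply: P2_1.
  + by apply/orP; left; apply/orP; left; apply/orP; right; apply/memF; apply: P2_2.
  + by apply/orP; left; apply/orP; right; apply/memF; apply: P2_3.
  + by apply/orP; right; apply/memF; apply: P2_4.
- by repeat (apply/andP; split); rewrite disjoints_subset; apply/subsetP => S h1; rewrite inE; apply/negP => h2;
    [ have := isCol_uniq (G1 _ h1) (G2 _ h2)
    | have := isCol_uniq (G1 _ h1) (G3 _ h2)
    | have := isCol_uniq (G1 _ h1) (G4 _ h2)
    | have := isCol_uniq (G2 _ h1) (G3 _ h2)
    | have := isCol_uniq (G2 _ h1) (G4 _ h2)
    | have := isCol_uniq (G3 _ h1) (G4 _ h2) ].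
- split; apply: factorP; try (by rewrite card_ord mulnC);
  [ by move=> v; rewrite /c1; case: ifP => _ //; case: ifP
  | exact: P3_1
  | by move=> v; rewrite /c2; case: ifP => _ //; case: ifP
  | exact: P3_2 ].
- split; apply: factorP; try (by rewrite card_ord);
  [ by move=> v; rewrite /c3 size_map size_enum_ord
  | exact: P3_3
  | by move=> v; rewrite /c4 size_map size_enum_ord
  | exact: P3_4 ].
Qed.
End S.

Unset Implicit Arguments.
Theorem mainTheorem4 (m : nat) (hm : 3 <= m) :
  exists F1 F2 F3 F4 : {set {set ('I_m * 'I_4)}},
    [/\ F1 :|: F2 :|: F3 :|: F4 = edge_set (lex_adj (@cycle_adj m) 4),
        [&& [disjoint F1 & F2], [disjoint F1 & F3], [disjoint F1 & F4],
            [disjoint F2 & F3], [disjoint F2 & F4] & [disjoint F3 & F4]],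
        is_cycle_factor 4 F1 /\ is_cycle_factor 4 F2 &
        is_cycle_factor m F3 /\ is_cycle_factor m F4].
Proof. exact: main_sec. Qed.
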